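(* Let $G$ be a signature that is not IM-terraced but all of whose pinnings $G_p$ with $\mathrm{dom}(p)\ne\emptyset$ are IM-terraced. Then $G$ is equivalent (by renaming variables) to a signature $F$ on $\{1,\dots,k\}$ such that: (a) the pinning of $F$ by $\{1\mapsto0,2\mapsto1\}$ is identically zero; and (b) there exist a configuration $z\in\{0,1\}^{\{3,\dots,k\}}$ and a non-degenerate signature $T:\{0,1\}^2\to\mathbb R_{\ge0}$ such that for all $x,y_3,\dots,y_k\in\{0,1\}$, $F(x,x,y_3,\dots,y_k)=T(y_3,x)$ if $y=z$ or $y=\overline z$, and $F(x,x,y_3,\dots,y_k)=0$ otherwise, where $y=(y_3,\dots,y_k)$.
   Context: A signature on $V$ is a function $\{0,1\}^V\to\mathbb R_{\ge0}$. A partial configuration $p$ is an element of $\{0,1\}^{\mathrm{dom}(p)}$ with $\mathrm{dom}(p)\subseteq V$; the pinning $F_p$ on $V\setminus\mathrm{dom}(p)$ is $F_p(x)=F(x,p)$; $p^{\{i\}}$ is $p$ with coordinate $i$ flipped. $F$ is IM-terraced if for every partial configuration $p$ and all $i,j\in\mathrm{dom}(p)$ with $p_i\ne p_j$: if $F_p$ is identically zero then $F_{p^{\{i\}}}$ and $F_{p^{\{j\}}}$ are linearly dependent (one is a scalar multiple of the other). An arity-2 signature $T$ is degenerate if $T(a,b)=U(a)U'(b)$ for some functions $U,U'$. $\overline z_i=1-z_i$. *)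

(* Defs.v *)
From mathcomp Require Import all_boot.
From Stdlib Require Import Reals.
Set Implicit Arguments. Unset Strict Implicit. Unset Printing Implicit Defensive.
Open Scope R_scope.

(* A signature on a finite variable set V is a function {0,1}^V -> R
   (nonnegativity is imposed as an explicit hypothesis where needed). *)

Definition free_var (V : finType) (D : {set V}) : finType := {v : V | v \in ~: D}.

(* A partial configuration with domain D is given by (D, p), where only the
   values of p : {ffun V -> bool} on D are relevant.  merge D p x is the full
   configuration agreeing with p on D and with x off D. *)
Definition merge (V : finType) (D : {set V}) (p : {ffun V -> bool})
  (x : {ffun free_var D -> bool}) : {ffun V -> bool} :=
  [ffun v => match (insub v : option (free_var D)) with
             | Some u => x u
             | None => p v end].

Arguments merge {V} D p x.

Definition pin (V : finType) (F : {ffun V -> bool} -> R) (D : {set V})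
  (p : {ffun V -> bool}) : {ffun free_var D -> bool} -> R :=
  fun x => F (@merge V D p x).

Arguments pin {V} F D p x.

Definition flip (V : finType) (p : {ffun V -> bool}) (i : V) : {ffun V -> bool} :=
  [ffun v => if v == i then ~~ p v else p v].

Definition lin_dep (A : Type) (f g : A -> R) : Prop :=
  exists c : R, (forall a, f a = c * g a) \/ (forall a, g a = c * f a).

Definition IM_terraced (V : finType) (F : {ffun V -> bool} -> R) : Prop :=
  forall (D : {set V}) (p : {ffun V -> bool}) (i j : V),
    i \in D -> j \in D -> p i != p j ->
    (forall x, pin F D p x = 0) ->
    lin_dep (pin F D (flip p i)) (pin F D (flip p j)).

Definition degenerate (T : bool -> bool -> R) : Prop :=
  exists U U' : bool -> R, forall a b, T a b = U a * U' b.

(* Positions 1,2,3 (0-based 0,1,2) among k = m+3 variables. *)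
Definition pos1 (m : nat) : 'I_m.+3 := inord 0.
Definition pos2 (m : nat) : 'I_m.+3 := inord 1.
Definition pos3 (m : nat) : 'I_m.+3 := inord 2.

(* Main.v *)
Require Import Defs.
From mathcomp Require Import all_boot.
From Stdlib Require Import Reals Lra Classical.
Open Scope R_scope.

Definition upd {V : finType} (D : {set V}) (p w : {ffun V -> bool}) : {ffun V -> bool} :=
  [ffun u => if u \in D then p u else w u].

Definition Ldep {V : finType} (F : {ffun V -> bool} -> R) (D : {set V}) (p1 p2 : {ffun V -> bool}) :=
  exists c, (forall w, F (upd D p1 w) = c * F (upd D p2 w)) \/
            (forall w, F (upd D p2 w) = c * F (upd D p1 w)).

Definition IMu {V : finType} (F : {ffun V -> bool} -> R) : Prop :=
  forall (D : {set V}) (p : {ffun V -> bool}) (i j : V),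
    i \in D -> j \in D -> p i != p j ->
    (forall w, F (upd D p w) = 0) -> Ldep F D (flip p i) (flip p j).

Lemma merge_in {V : finType} (D : {set V}) (p : {ffun V -> bool}) (x : {ffun free_var D -> bool}) u : u \in D -> Defs.merge D p x u = p u.
Proof. move=> uD; rewrite /merge ffunE insubN //; by rewrite inE uD. Qed.

Lemma merge_upd {V : finType} (D : {set V}) (p q : {ffun V -> bool}) (x : {ffun free_var D -> bool}) : Defs.merge D p x = upd D p (Defs.merge D q x).
Proof.
apply/ffunP => u; rewrite /upd ffunE; case: ifP => uD; first by rewrite merge_in.
rewrite /merge !ffunE; case: insubP => //; by rewrite inE uD.
Qed.

Lemma upd_merge {V : finType} (D : {set V}) (p w : {ffun V -> bool}) :
  upd D p w = Defs.merge D p [ffun u : free_var D => w (val u)].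
Proof.
apply/ffunP => u; rewrite /upd ffunE; case: ifP => uD; first by rewrite merge_in.
rewrite /merge !ffunE; case: insubP => [u' _ <-|]; first by rewrite ffunE.
by rewrite inE uD.
Qed.

Lemma IM_iff {V : finType} (F : {ffun V -> bool} -> R) : IM_terraced F <-> IMu F.
Proof.
split.
- move=> H D p i j iD jD pij Z.
  have Z' : forall x, pin F D p x = 0 by move=> x; rewrite /pin (merge_upd D p p); apply: Z.
  have [c [Hc|Hc]] := H D p i j iD jD pij Z'; exists c; [left|right] => w;
  rewrite !upd_merge; apply: Hc.
- move=> H D p i j iD jD pij Z.
  have Z' : forall w, F (upd D p w) = 0 by move=> w; rewrite upd_merge; apply: Z.
  have [c [Hc|Hc]] := H D p i j iD jD pij Z'; exists c; [left|right] => x;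
  rewrite /pin; have := Hc (Defs.merge D (flip p i) x); by rewrite -!merge_upd.
Qed.

Lemma Ldep_sym {V : finType} (F : {ffun V -> bool} -> R) D p1 p2 : Ldep F D p1 p2 -> Ldep F D p2 p1.
Proof. by move=> [c [H|H]]; exists c; [right|left]. Qed.

Lemma ldep_minor (X : Type) (a b : X -> R) :
  (forall x y, a x * b y = a y * b x) ->
  exists c, (forall x, a x = c * b x) \/ (forall x, b x = c * a x).
Proof.
move=> H.
destruct (classic (exists x0, b x0 <> 0)) as [[x0 Hx0]|Hn].
- exists (a x0 / b x0); left => x.
  apply (Rmult_eq_reg_r (b x0)) => //.
  have := H x x0 => e.
  transitivity (a x0 * b x / b x0 * b x0); last by field.
  by rewrite -e; field.
- exists 0; right => x. destruct (Req_dec (b x) 0) as [E|E]; first by rewrite E; ring.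
  exfalso; apply: Hn; by exists x.
Qed.

Lemma par_trans a0 b0 a1 b1 a2 b2 : (a0 <> 0 \/ b0 <> 0) ->
  a0 * b1 = a1 * b0 -> a0 * b2 = a2 * b0 -> a1 * b2 = a2 * b1.
Proof.
move=> [h|h] e1 e2.
- apply (Rmult_eq_reg_l a0) => //.
  transitivity (a1 * (a0 * b2)); first ring. rewrite e2.
  transitivity (a2 * (a0 * b1)); last ring. rewrite e1; ring.
- apply (Rmult_eq_reg_l b0) => //.
  transitivity (b2 * (a1 * b0)); first ring. rewrite -e1.
  transitivity (b1 * (a2 * b0)); last ring. rewrite -e2; ring.
Qed.

Section Nest.
Variables (V : finType) (G : {ffun V -> bool} -> R) (v : V) (q : {ffun V -> bool}).
Definition V1 := free_var [set v].
Definition restr1 (w : {ffun V -> bool}) : {ffun V1 -> bool} := [ffun u => w (val u)].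
Definition dn (D : {set V}) : {set V1} := [set u : V1 | val u \in D].
Definition G1 := pin G [set v] q.

Lemma nest (D : {set V}) (P w : {ffun V -> bool}) : P v = q v -> v \in D -> G1 (upd (dn D) (restr1 P) (restr1 w)) = G (upd D P w).
Proof.
move=> Pv vD; rewrite /G1 /pin; congr G; apply/ffunP => u.
rewrite /Defs.merge !ffunE; case: insubP => [u' _ <-|].
- by rewrite !ffunE inE.
- rewrite !inE negbK => /eqP ->; by rewrite vD Pv.
Qed.

Lemma restr1_surj (w1 : {ffun V1 -> bool}) : w1 = restr1 (Defs.merge [set v] q w1).
Proof. apply/ffunP => u; by rewrite !ffunE valK. Qed.

Lemma restr1_flip (P : {ffun V -> bool}) (i1 : V1) : restr1 (flip P (val i1)) = flip (restr1 P) i1.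
Proof. apply/ffunP => u; by rewrite !ffunE val_eqE. Qed.

Lemma nest_zero (D : {set V}) (P : {ffun V -> bool}) : v \in D -> P v = q v -> (forall w, G (upd D P w) = 0) ->
  forall w1, G1 (upd (dn D) (restr1 P) w1) = 0.
Proof. move=> vD Pv Z w1; by rewrite (restr1_surj w1) nest. Qed.

Lemma nest_ldep (D : {set V}) (P1 P2 : {ffun V -> bool}) : v \in D -> P1 v = q v -> P2 v = q v ->
  Ldep G1 (dn D) (restr1 P1) (restr1 P2) -> Ldep G D P1 P2.
Proof.
move=> vD h1 h2 [c [H|H]]; exists c; [left|right] => w; rewrite -!nest //; apply: H.
Qed.
End Nest.

Definition zlike {V : finType} (D : {set V}) (w0 w : {ffun V -> bool}) :=
  [forall v, (v \notin D) ==> (w v == w0 v)].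
Definition zblike {V : finType} (D : {set V}) (w0 w : {ffun V -> bool}) :=
  [forall v, (v \notin D) ==> (w v == ~~ w0 v)].

Lemma core {V : finType} (D : {set V}) (a b : {ffun V -> bool} -> R) :
  (forall (w u : {ffun V -> bool}) v, v \notin D -> w v = u v -> a w * b u = a u * b w) ->
  ~ (exists c, (forall w, a w = c * b w) \/ (forall w, b w = c * a w)) ->
  exists w0, forall w, (a w <> 0 \/ b w <> 0) -> zlike D w0 w || zblike D w0 w.
Proof.
move=> Hd Hn.
have [x [y Hxy]] : exists x y, a x * b y <> a y * b x.
  apply: NNPP => H; apply: Hn; apply: ldep_minor => x y.
  apply: NNPP => H'; apply: H; by exists x, y.
have nz : a x <> 0 \/ b x <> 0.
  apply: NNPP => H; apply: Hxy.
  have ha : a x = 0 by apply: NNPP => h; apply: H; left.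
  have hb : b x = 0 by apply: NNPP => h; apply: H; right.
  rewrite ha hb; ring.
exists x => w nzw.
case E1: (zlike D x w) => //; case E2: (zblike D x w) => //=.
exfalso.
move: E1 E2; rewrite /zlike /zblike => /negbT; rewrite negb_forall => /existsP [v1].
rewrite negb_imply => /andP [v1D h1] /negbT; rewrite negb_forall => /existsP [v2].
rewrite negb_imply => /andP [v2D h2].
have Mxw : a x * b w = a w * b x.
  apply: (Hd _ _ v2) => //. by move: h2; case: (w v2); case: (x v2).
have Mxu : forall u, a x * b u = a u * b x.
  move=> u.
  case E: [exists v, (v \notin D) && (u v == x v)].
  - move/existsP: E => [v /andP [vD /eqP e]]; apply: (Hd _ _ v) => //.
  - have Mwu : a w * b u = a u * b w.
      apply: (Hd _ _ v1) => //.
      move/negbT: E; rewrite negb_exists => /forallP /(_ v1); rewrite v1D /=.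
      by move: h1; case: (w v1); case: (x v1); case: (u v1).
    have T := par_trans _ _ _ _ _ _ nzw (esym Mxw) Mwu. exact T.
apply: Hxy; exact: (par_trans _ _ _ _ _ _ nz (Mxu x) (Mxu y)).
Qed.

Lemma updZ {V : finType} (D : {set V}) (w0 x Q : {ffun V -> bool}) :
  zlike D w0 x -> upd D Q x = upd D Q w0.
Proof.
move=> /forallP H; apply/ffunP => y; rewrite !ffunE; case: ifP => // yD.
by move: (H y); rewrite yD /= => /eqP.
Qed.

Lemma updZb {V : finType} (D : {set V}) (w0 x Q : {ffun V -> bool}) :
  zblike D w0 x -> upd D Q x = upd D Q [ffun y => ~~ w0 y].
Proof.
move=> /forallP H; apply/ffunP => y; rewrite !ffunE; case: ifP => // yD.
by move: (H y); rewrite yD /= => /eqP.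
Qed.

Theorem step1 (V : finType) (G : {ffun V -> bool} -> R) :
  ~ IM_terraced G ->
  (forall (D : {set V}) (p : {ffun V -> bool}), D != set0 -> IM_terraced (pin G D p)) ->
  exists (p : {ffun V -> bool}) i0 j0, p i0 = false /\ p j0 = true /\
    (forall w, G (upd [set i0; j0] p w) = 0) /\
    ~ Ldep G [set i0; j0] (flip p i0) (flip p j0) /\
    (forall (w u : {ffun V -> bool}) v, v \notin [set i0; j0] -> w v = u v ->
       G (upd [set i0; j0] (flip p i0) w) * G (upd [set i0; j0] (flip p j0) u) =
       G (upd [set i0; j0] (flip p i0) u) * G (upd [set i0; j0] (flip p j0) w)).
Proof.
move=> nIM Hpin.
have HP : forall v (q : {ffun V -> bool}), IMu (pin G [set v] q).
  move=> v q; apply/IM_iff; apply: Hpin; apply/set0Pn; exists v; exact: set11.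
have [D [p [i [j [iD [jD [pij [Z nL]]]]]]]] : exists (D : {set V}) (p : {ffun V -> bool}) (i j : V), i \in D /\ j \in D /\
    p i != p j /\ (forall w, G (upd D p w) = 0) /\ ~ Ldep G D (flip p i) (flip p j).
  apply: NNPP => H; apply: nIM; apply/IM_iff => D p i j iD jD pij Z.
  apply: NNPP => nL; apply: H; by exists D, p, i, j.
have ij : i != j by apply/eqP => e; move: pij; rewrite e eqxx.
have DE : D = [set i; j].
  apply/setP => v; rewrite !inE; apply/idP/idP; last by case/orP => /eqP ->.
  move=> vD; apply: NNPP => H.
  have vi : v != i by apply/eqP => e; apply: H; rewrite e eqxx.
  have vj : v != j by apply/eqP => e; apply: H; rewrite e eqxx orbT.
  apply: nL.
  have i1P : i \in ~: [set v] by rewrite !inE eq_sym.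
  have j1P : j \in ~: [set v] by rewrite !inE eq_sym.
  pose i1 : V1 V v := exist _ i i1P.
  pose j1 : V1 V v := exist _ j j1P.
  apply: (nest_ldep _ _ v p) => //.
  - by rewrite ffunE (negbTE vi).
  - by rewrite ffunE (negbTE vj).
  rewrite -[flip p i]/(flip p (val i1)) -[flip p j]/(flip p (val j1)) !restr1_flip.
  apply: (HP v p); first by rewrite inE /=.
  - by rewrite inE /=.
  - by rewrite !ffunE.
  - by apply: nest_zero.
subst D.
have [i0 [j0 [pi0 [pj0 [Z0 nL0]]]]] : exists i0 j0 : V, p i0 = false /\ p j0 = true /\
   (forall w, G (upd [set i0; j0] p w) = 0) /\ ~ Ldep G [set i0;j0] (flip p i0) (flip p j0).
  case pi: (p i).
  - have pj : p j = false by move: pij; rewrite pi; case: (p j).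
    exists j, i; rewrite setUC; split => //; split => //; split => //.
    move=> L; apply: nL; exact: Ldep_sym.
  - have pj : p j = true by move: pij; rewrite pi; case: (p j).
    by exists i, j.
clear Z nL pij ij iD jD i j.
exists p, i0, j0; do 4! split => //.
have i0j0 : i0 != j0 by apply/eqP => e; move: pi0; rewrite e pj0.
move=> w u v vD e.
have vi : v != i0 by apply/eqP => e'; move: vD; rewrite e' !inE eqxx.
have vj : v != j0 by apply/eqP => e'; move: vD; rewrite e' !inE eqxx orbT.
have ij0 : i0 != v by rewrite eq_sym.
have jj0 : j0 != v by rewrite eq_sym.
pose P : {ffun V -> bool} := [ffun x => if x == v then w v else p x].
have i1P : i0 \in ~: [set v] by rewrite !inE eq_sym.
have j1P : j0 \in ~: [set v] by rewrite !inE eq_sym.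
pose i1 : V1 V v := exist _ i0 i1P.
pose j1 : V1 V v := exist _ j0 j1P.
have L : Ldep G (v |: [set i0; j0]) (flip P i0) (flip P j0).
  apply: (nest_ldep _ _ v P); first by rewrite setU11.
  - rewrite !ffunE eqxx; case: ifP => // /eqP e1; by move: vi; rewrite e1 eqxx.
  - rewrite !ffunE eqxx; case: ifP => // /eqP e1; by move: vj; rewrite e1 eqxx.
  rewrite -[flip P i0]/(flip P (val i1)) -[flip P j0]/(flip P (val j1)) !restr1_flip.
  apply: (HP v P).
  - by rewrite inE /= !inE eqxx orbT.
  - by rewrite inE /= !inE eqxx !orbT.
  - rewrite !ffunE /=. by rewrite (negbTE ij0) (negbTE jj0) pi0 pj0.
  apply: nest_zero; first by rewrite setU11.
    by [].
  move=> w'; rewrite -(Z0 [ffun x => if x == v then P v else w' x]); congr G.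
  apply/ffunP => y; rewrite !ffunE !inE.
  case: (y =P v) => [->|ne] /=; last by [].
  by rewrite (negbTE vi) (negbTE vj) eqxx.
have E : forall (x : {ffun V -> bool}) k, x v = w v -> k != v ->
    upd (v |: [set i0; j0]) (flip P k) x = upd [set i0; j0] (flip p k) x.
  move=> x k xv kv; apply/ffunP => y; rewrite !ffunE !inE.
  case: (y =P v) => [->|ne] /=.
  - by rewrite (negbTE vi) (negbTE vj) /= eq_sym (negbTE kv) xv.
  - by [].
case: L => c [L|L].
- have h1 := L w; have h2 := L u; rewrite !E // in h1 h2; rewrite h1 h2; ring.
- have h1 := L w; have h2 := L u; rewrite !E // in h1 h2; rewrite h1 h2; ring.
Qed.

Theorem mainTheorem12 (V : finType) (G : {ffun V -> bool} -> R) :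
  (forall x, 0 <= G x) ->
  ~ IM_terraced G ->
  (forall (D : {set V}) (p : {ffun V -> bool}), D != set0 -> IM_terraced (pin G D p)) ->
  exists (m : nat) (sigma : 'I_m.+3 -> V) (F : {ffun 'I_m.+3 -> bool} -> R),
    bijective sigma /\
    (forall y : {ffun V -> bool}, G y = F [ffun i => y (sigma i)]) /\
    (* (a) pinning by {1 -> 0, 2 -> 1} is identically zero *)
    (forall x, pin F [set pos1 m; pos2 m] [ffun i => i == pos2 m] x = 0) /\
    (* (b) *)
    (exists (z : {ffun 'I_m.+3 -> bool}) (T : bool -> bool -> R),
       (forall a b, 0 <= T a b) /\ ~ degenerate T /\
       forall w : {ffun 'I_m.+3 -> bool}, w (pos1 m) = w (pos2 m) ->
         F w = if [forall i : 'I_m.+3, (2 <= nat_of_ord i)%nat ==> (w i == z i)]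
                  || [forall i : 'I_m.+3, (2 <= nat_of_ord i)%nat ==> (w i == ~~ z i)]
               then T (w (pos3 m)) (w (pos1 m)) else 0).
Proof.
move=> Gpos nIM Hpin.
have [p [i0 [j0 [pi0 [pj0 [Z0 [nL H1]]]]]]] := step1 _ _ nIM Hpin.
set D := [set i0; j0] in Z0 nL H1.
have i0j0 : i0 != j0 by apply/eqP => e; move: pi0; rewrite e pj0.
have i0D : i0 \in D by rewrite !inE eqxx.
have j0D : j0 \in D by rewrite !inE eqxx orbT.
pose a := fun w => G (upd D (flip p i0) w).
pose b := fun w => G (upd D (flip p j0) w).
have [w0 Hw0] := core D a b H1 nL.
have [v3 v3D] : exists v3, v3 \notin D.
  apply: NNPP => H; apply: nL; apply: ldep_minor => x y.
  have E : forall (Q x' y' : {ffun V -> bool}), upd D Q x' = upd D Q y'.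
    move=> Q x' y'; apply/ffunP => u; rewrite !ffunE.
    case: ifP => // uD; exfalso; apply: H; exists u; by rewrite uD.
  by rewrite /a /b (E (flip p i0) x y) (E (flip p j0) y x).
pose f := [seq v <- enum V | v \notin D].
pose s := [:: i0, j0 & f].
have v3f : v3 \in f by rewrite mem_filter v3D mem_enum.
pose m := (size f).-1.
have Hsize : size s = m.+3.
  have : (0 < size f)%nat by case: (f) v3f.
  by move=> h; rewrite /s /= /m prednK.
have mem_s : forall v, v \in s.
  move=> v; rewrite /s !inE mem_filter mem_enum andbT.
  case vD: (v \in D); rewrite /= ?orbT //.
  by move: vD; rewrite !inE => /orP [] ->; rewrite ?orbT.
have uniq_s : uniq s.
  rewrite /s /= in_cons negb_or i0j0 /= !mem_filter /D !inE !eqxx /= ?orbT /=.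
  by rewrite filter_uniq // enum_uniq.
pose sigma := fun k : 'I_m.+3 => nth i0 s k.
pose tau := fun v => (inord (index v s) : 'I_m.+3).
have st : forall v, sigma (tau v) = v.
  move=> v; rewrite /sigma /tau inordK ?nth_index //.
  by rewrite -Hsize index_mem.
have ts : forall k, tau (sigma k) = k.
  move=> k; apply/val_inj; rewrite /tau /sigma.
  have hk : (k < size s)%nat by rewrite Hsize.
  have h := index_uniq i0 hk uniq_s.
  rewrite -[RHS]h; apply: inordK.
  by rewrite h ltn_ord.
have sD : forall k : 'I_m.+3, (sigma k \notin D) = (2 <= k)%nat.
  case=> [[|[|k']] Hk]; rewrite /sigma /=; first by rewrite i0D.
    by rewrite j0D.
  have : (k' < size f)%nat by rewrite -(ltn_add2l 2); rewrite -[(2 + size f)%nat]/(size s) Hsize.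
  by move=> h; move: (mem_nth i0 h); rewrite mem_filter => /andP [->].
have sp1 : sigma (pos1 m) = i0 by rewrite /sigma /pos1 inordK.
have sp2 : sigma (pos2 m) = j0 by rewrite /sigma /pos2 inordK.
have tp1 : tau i0 = pos1 m by rewrite -sp1 ts.
have tp2 : tau j0 = pos2 m by rewrite -sp2 ts.
pose v3' := sigma (pos3 m).
have v3'D : v3' \notin D by rewrite /v3' sD /pos3 inordK.
pose F := fun y : {ffun 'I_m.+3 -> bool} => G [ffun v => y (tau v)].
exists m, sigma, F; split.
  by exists tau => [k|v]; [apply: ts | apply: st].
split.
  move=> y; rewrite /F; congr G; apply/ffunP => v; by rewrite !ffunE st.
split.
  move=> x; rewrite /pin /F -(Z0 [ffun v => Defs.merge [set pos1 m; pos2 m] [ffun i => i == pos2 m] x (tau v)]).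
  congr G; apply/ffunP => v; rewrite [in RHS]ffunE; case: ifP => // vD.
  have p12 : (pos1 m == pos2 m) = false 
    by apply/eqP => e; have := congr1 (@nat_of_ord _) e; rewrite /pos1 /pos2 !inordK.
  move: vD; rewrite !inE => /orP [] /eqP ->; rewrite ffunE ?tp1 ?tp2 merge_in ?ffunE ?p12 ?eqxx //;
    by rewrite !inE eqxx ?orbT.
pose cw0 : {ffun V -> bool} := [ffun y => ~~ w0 y].
pose T := fun (a0 x : bool) => G (upd D (if x then flip p i0 else flip p j0)
                                  (if a0 == w0 v3' then w0 else cw0)).
exists [ffun k => w0 (sigma k)], T; split; first by move=> *; apply: Gpos.
have key : forall x, (a x <> 0 \/ b x <> 0) ->
    a x = T (x v3') true /\ b x = T (x v3') false.
  move=> x nz; have := Hw0 x nz; case/orP => [zl|zb].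
  - have e3 : x v3' = w0 v3'.
      by move/forallP: zl => /(_ v3'); rewrite v3'D /= => /eqP.
    by rewrite /a /b /T e3 eqxx !(updZ _ _ _ _ zl).
  - have e3 : x v3' = ~~ w0 v3'.
      by move/forallP: zb => /(_ v3'); rewrite v3'D /= => /eqP.
    have ne : (~~ w0 v3' == w0 v3') = false by case: (w0 v3').
    by rewrite /a /b /T e3 ne !(updZb _ _ _ _ zb).
have zero : forall x, ~ (a x <> 0 \/ b x <> 0) -> a x = 0 /\ b x = 0.
  move=> x H; split; apply: NNPP => h; apply: H; by [left|right].
split.
  move=> [U [U' HU]]; apply: nL; apply: ldep_minor => x y.
  have K : forall x, exists k, a x = k * U' true /\ b x = k * U' false.
    move=> x'; case: (classic (a x' <> 0 \/ b x' <> 0)) => [nz|nz].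
    - have [h1 h2] := key x' nz; exists (U (x' v3')); by rewrite h1 h2 !HU.
    - have [h1 h2] := zero x' nz; exists 0; rewrite h1 h2; split; ring.
  have [kx [hx1 hx2]] := K x; have [ky [hy1 hy2]] := K y.
  rewrite -/(a x) -/(a y) -/(b x) -/(b y) hx1 hx2 hy1 hy2; ring.
move=> w e.
pose W : {ffun V -> bool} := [ffun v => w (tau v)].
have sND : forall k : 'I_m.+3, (2 <= k)%nat = (sigma k \notin D) by move=> k; rewrite sD.
have B1 : [forall i : 'I_m.+3, (2 <= i)%nat ==> (w i == [ffun k => w0 (sigma k)] i)] = zlike D w0 W.
  apply/idP/idP => /forallP H; apply/forallP; [move=> v | move=> k].
  - have := H (tau v); by rewrite sND st /W ffunE st ffunE.
  - have := H (sigma k); by rewrite -sND /W ffunE ts ffunE.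
have B2 : [forall i : 'I_m.+3, (2 <= i)%nat ==> (w i == ~~ [ffun k => w0 (sigma k)] i)] = zblike D w0 W.
  apply/idP/idP => /forallP H; apply/forallP; [move=> v | move=> k].
  - have := H (tau v); by rewrite sND st /W ffunE st ffunE.
  - have := H (sigma k); by rewrite -sND /W ffunE ts ffunE.
rewrite B1 B2.
have HW : F w = G (upd D (if w (pos1 m) then flip p i0 else flip p j0) W).
  rewrite /F -/W; congr G; apply/ffunP => y; rewrite [in RHS]ffunE; case: ifP => // yD.
  move: yD; rewrite !inE => /orP [] /eqP ->; rewrite ffunE ?tp1 ?tp2 -?e;
    case: (w (pos1 m)); rewrite ffunE; case: eqP => E';
    first [by rewrite ?pi0 ?pj0 | by move: i0j0; rewrite E' eqxx | by case: E'].

have w3 : w (pos3 m) = W v3' by rewrite ffunE /v3' ts.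
rewrite HW w3.
case Ez: (zlike D w0 W) => /=.
  have e3 : W v3' = w0 v3' by move/forallP: Ez => /(_ v3'); rewrite v3'D /= => /eqP.
  by rewrite /T e3 eqxx (updZ _ _ _ _ Ez).
case Eb: (zblike D w0 W).
  have e3 : W v3' = ~~ w0 v3' by move/forallP: Eb => /(_ v3'); rewrite v3'D /= => /eqP.
  have ne : (~~ w0 v3' == w0 v3') = false by case: (w0 v3').
  by rewrite /T e3 ne (updZb _ _ _ _ Eb).
have nz : ~ (a W <> 0 \/ b W <> 0) by move=> h; move: (Hw0 W h); rewrite Ez Eb.
have [h1 h2] := zero W nz.
by case: (w (pos1 m)).
Qed.
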